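(* Let $M,N,K$ be positive integers, let $s,r$ be integers with $1\le r\le \min\{s,K\}$ and $s\le N$, and let $A\in\mathbb{R}^{M\times N}$. Suppose the map $Z\mapsto AZ$ is injective on $\Sigma_{s,r}$. Then for every $X\in\Sigma_s$ we have $\operatorname{rank}(X)=\operatorname{rank}(AX)$.
   Context: A matrix $X\in\mathbb{R}^{N\times K}$ is called $s$-row sparse if at most $s$ of its rows are non-zero. $\Sigma_s$ denotes the set of all $s$-row sparse matrices in $\mathbb{R}^{N\times K}$, and $\Sigma_{s,r}$ denotes the set of all $s$-row sparse matrices in $\mathbb{R}^{N\times K}$ of rank at least $r$. *)

(* Defs.v *)
From mathcomp Require Import all_boot all_order all_algebra.
From mathcomp Require Import reals.
Set Implicit Arguments. Unset Strict Implicit. Unset Printing Implicit Defensive.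
Import GRing.Theory Num.Theory.
Local Open Scope ring_scope.

Definition row_sparse (R : nzRingType) (N K s : nat) (X : 'M[R]_(N, K)) : bool :=
  (#|[set i : 'I_N | row i X != 0%R]| <= s)%N.

Definition Sigma_s (R : nzRingType) (N K s : nat) : pred 'M[R]_(N, K) :=
  fun X => row_sparse s X.

Definition Sigma_sr (R : fieldType) (N K s r : nat) : pred 'M[R]_(N, K) :=
  fun X => row_sparse s X && (r <= \rank X)%N.

(* Main.v *)
Require Import Defs.
From mathcomp Require Import all_boot all_order all_algebra.
From mathcomp Require Import reals.
From mathcomp Require Import lra.
Set Implicit Arguments. Unset Strict Implicit. Unset Printing Implicit Defensive.
Import GRing.Theory Num.Theory.
Local Open Scope ring_scope.

Lemma ext_set (T : finType) (A : {set T}) n :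
  (#|A| <= n <= #|T|)%N -> exists B : {set T}, A \subset B /\ #|B| = n.
Proof.
elim: n A => [|n IH] A /andP[hA hT].
  exists A; split => //; by apply/eqP; rewrite -leqn0.
case: (ltngtP #|A| n.+1) => h; last 2 first.
- by move: hA; rewrite leqNgt h.
- by exists A.
have [B [AB cB]] : exists B : {set T}, A \subset B /\ #|B| = n.
  by apply: IH; rewrite -ltnS h ltnW.
case: (pickP (fun y => y \notin B)) => [y yB|hB].
  exists (y |: B); split; first by apply: subset_trans AB (subsetUr _ _).
  by rewrite cardsU1 yB cB.
have : B = setT by apply/setP => y; rewrite inE; move: (hB y) => /negbFE.
by move=> eB; move: hT; rewrite -cB eB cardsT ltnn.
Qed.
Lemma key (R : realType) (M N K s r : nat) (A : 'M[R]_(M, N)) (x : 'cV[R]_N) (i0 : 'I_N) :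
  (1 <= r)%N -> (r <= minn s K)%N -> (s <= N)%N ->
  {in @Sigma_sr R N K s r &, injective (fun Z => A *m Z)} ->
  x i0 ord0 != 0 -> A *m x = 0 -> (#|[set i | x i ord0 != 0%R]| <= s)%N -> False.
Proof.
case: r => [//|r] _ hr hsN inj hx0 hAx hsupp.
have hrs : (r.+1 <= s)%N by move: hr; rewrite leq_min => /andP[].
have hrK : (r.+1 <= K)%N by move: hr; rewrite leq_min => /andP[].
have [T [sT cT]] : exists T : {set 'I_N}, [set i | x i ord0 != 0%R] \subset T /\ #|T| = s.
  by apply: ext_set; rewrite hsupp card_ord hsN.
have i0T : i0 \in T by apply: (subsetP sT); rewrite inE.
set L := i0 :: enum (T :\ i0).
have sL : size L = s.
  by move: cT; rewrite (cardsD1 i0 T) i0T /= cardE => <-.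
have uL : uniq L by rewrite /= mem_enum !inE eqxx /= enum_uniq.
have LT : forall k, (k < s)%N -> nth i0 L k \in T.
  move=> k hk; have : nth i0 L k \in L by rewrite mem_nth // sL.
  by rewrite inE => /orP[/eqP->|] //; rewrite mem_enum => /setD1P[].
set g : 'I_r.+1 -> 'I_K := widen_ord hrK.
set f : 'I_r.+1 -> 'I_N := fun j => nth i0 L j.
set D : 'M[R]_(N, K) := \matrix_(i, k) ((((k : nat) != 0%N) && (k < r.+1)%N) && (i == nth i0 L k))%:R.
set E : 'M[R]_(N, K) := x *m delta_mx 0 (g ord0).
set Z := fun t : R => D + t *: E.
have hZ : forall t i k, Z t i k = ((((k : nat) != 0%N) && (k < r.+1)%N) && (i == nth i0 L k))%:R
     + t * (x i ord0 * ((k : nat) == 0%N)%:R).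
  move=> t i k; rewrite !mxE big_ord1 !mxE eqxx /=.
  done.
have hrank : forall t, t != 0 -> (r.+1 <= \rank (Z t))%N.
  move=> t ht.
  have -> : (r.+1 = \rank (mxsub f g (Z t)))%N.
    apply/esym/mxrank_unit; rewrite unitmxE unitfE det_trig.
      rewrite big_ord_recl mxE hZ /=.
      rewrite mulr1 add0r big1 ?mulr1; first by rewrite mulf_neq0.
      move=> i _; rewrite mxE hZ /= mulr0 mulr0 addr0 /f.
      by rewrite /bump /= add1n ltnS ltn_ord /= eqxx.
    apply/is_trig_mxP => a b hab; rewrite mxE hZ /=.
    have hb : (b : nat) != 0%N by rewrite -lt0n (leq_ltn_trans _ hab).
    rewrite (negbTE hb) mulr0 mulr0 addr0 /f (nth_uniq i0) ?sL ?(leq_trans _ hrs) //.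
    by rewrite (ltn_eqF hab) andbF.
  rewrite mxsubrc rowsubE -[Z t]mulmx1 -mulmx_colsub.
  rewrite [in X in (_ <= X)%N]mulmx1.
  exact: leq_trans (mxrankM_maxr _ _) (mxrankM_maxl _ _).
have hsp : forall t, Z t \in @Sigma_sr R N K s r.+1 -> True by [].
have hsig : forall t, t != 0 -> Z t \in @Sigma_sr R N K s r.+1.
  move=> t ht; rewrite unfold_in /Sigma_sr /= hrank // andbT /row_sparse.
  rewrite -cT; apply: subset_leq_card; apply/subsetP => i; rewrite inE.
  apply: contraR => iT; apply/eqP/rowP => k; rewrite [LHS]mxE hZ mxE.
  have -> : x i ord0 = 0.
    by apply/eqP; apply: contraNT iT => hi; apply: (subsetP sT); rewrite inE.
  rewrite mul0r mulr0 addr0.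
  case: (ltnP k r.+1) => hk; last by rewrite andbF.
  case: (i =P nth i0 L k) => [ei|_]; last by rewrite andbF.
  by move: iT; rewrite ei LT // (leq_trans hk hrs).
have h1 : (1 : R) != 0 by rewrite oner_neq0.
have h2 : (2 : R) != 0 by rewrite pnatr_eq0.
have eAZ : forall t, A *m Z t = A *m D.
  move=> t; rewrite /Z mulmxDr -scalemxAr /E mulmxA hAx mul0mx scaler0 addr0 //.
have := inj _ _ (hsig _ h1) (hsig _ h2) (etrans (eAZ 1) (esym (eAZ 2))).
move/matrixP => /(_ i0 (g ord0)); rewrite !hZ /= mulr1.
move=> e; have : x i0 ord0 = 0 by lra.
by move/eqP; rewrite (negbTE hx0).
Qed.

Theorem proposition1 (R : realType) (M N K s r : nat)
  (A : 'M[R]_(M, N)) :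
  (0 < M)%N -> (0 < N)%N -> (0 < K)%N ->
  (1 <= r)%N -> (r <= minn s K)%N -> (s <= N)%N ->
  {in @Sigma_sr R N K s r &, injective (fun Z : 'M[R]_(N, K) => A *m Z)} ->
  forall X : 'M[R]_(N, K), X \in @Sigma_s R N K s -> \rank X = \rank (A *m X).
Proof.
move=> _ _ _ hr1 hr hsN inj X hX.
apply/eqP; rewrite eqn_leq mxrankM_maxr andbT leqNgt; apply/negP => hlt.
set B := A *m X.
have hnk : ~~ (kermx B^T <= kermx X^T)%MS.
  apply/negP => /mxrankS; rewrite !mxrank_ker !mxrank_tr.
  apply/negP; rewrite -ltnNge; apply: ltn_sub2l => //.
  exact: leq_trans hlt (rank_leq_col X).
case/row_subPn: hnk => i hi.
set u := row i (kermx B^T).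
have hu1 : u *m B^T = 0 by apply/eqP; rewrite -sub_kermx row_sub.
have hu2 : u *m X^T != 0 by rewrite -sub_kermx.
set x := X *m u^T.
have hAx : A *m x = 0.
  by rewrite /x mulmxA -/B -[B]trmxK -(trmx_mul u B^T) hu1 trmx0.
have [i0 hi0] : exists i0, x i0 ord0 != 0.
  apply/existsP; apply: contraR hu2 => /existsPn h.
  rewrite -[u *m X^T]trmxK trmx_mul trmxK -/x; apply/eqP/matrixP => a b.
  by rewrite !mxE ord1; move: (h b); rewrite negbK /x mxE => /eqP.
apply: (key hr1 hr hsN inj hi0 hAx).
move: hX; rewrite unfold_in /Sigma_s /row_sparse => hX.
apply: leq_trans hX; apply: subset_leq_card; apply/subsetP => j; rewrite !inE.
apply: contraNN => /eqP hj; apply/eqP.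
rewrite /x mxE big1 // => k _.
by move/rowP: hj => /(_ k); rewrite !mxE => ->; rewrite mul0r.
Qed.
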